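(* Let $\rho,\sigma$ be quantum states, $r\ge0$, $\eta\in(0,1]$, and let $\beta^r(\rho,\sigma)=\sup_{M\in\mathcal M^r}|\operatorname{tr}(M(\rho-\sigma))|$. If $\beta^r(\rho,\sigma)<\eta$, then $D^{r,\eta}_H(\rho\|\sigma)\le-\log\big(1-\beta^r(\rho,\sigma)/\eta\big)$. Furthermore, let $\delta\ge0$ and $|\psi\rangle$ a pure state in a Hilbert space of dimension $d$, with strong complexity $C^\delta_{\mathrm{strong}}(|\psi\rangle)=\inf\{r\ge0:\beta^r(\psi,\pi)\ge1-1/d-\delta\}$, $\pi=\mathbb 1/d$, $\psi=|\psi\rangle\langle\psi|$. If $r<C^\delta_{\mathrm{strong}}(|\psi\rangle)$ and $\eta>1-d^{-1}-\delta$, then with $c=(1-d^{-1}-\delta)/\eta<1$, $$H^{r,\eta}_H(\psi)>\log d-\log\frac1{1-c}.$$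
   Context: All logarithms are natural; POVM effect = operator $0\le Q\le\mathbb 1$. $\{\mathcal M^r\}_{r\ge0}$ is a family of sets of POVM effects on the $d$-dimensional system with $\mathbb 1\in\mathcal M^0$ and $\mathcal M^r\subseteq\mathcal M^{r'}$ for $r\le r'$. Complexity relative entropy: $D^{r,\eta}_H(\rho\|\Gamma)=-\log\inf\{\operatorname{tr}(Q\Gamma)/\operatorname{tr}(Q\rho): Q\in\mathcal M^r,\ \operatorname{tr}(Q\rho)\ge\eta\}$; complexity entropy $H^{r,\eta}_H(\rho)=-D^{r,\eta}_H(\rho\|\mathbb 1)$. *)

(* Defs.v *)
From mathcomp Require Import all_boot all_order all_algebra.
From mathcomp Require Import all_classical all_reals all_analysis.
From mathcomp.real_closed Require Import complex.
Set Implicit Arguments. Unset Strict Implicit. Unset Printing Implicit Defensive.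
Import Order.TTheory GRing.Theory Num.Theory.
Local Open Scope ring_scope.
Local Open Scope classical_set_scope.

Section QDefs.
Variable R : realType.
Local Notation C := R[i].
Variable d : nat.

Definition psdmx (A : 'M[C]_d) : Prop :=
  (forall i j, A j i = (A i j)^*) /\
  (forall v : 'rV[C]_d, 0 <= \sum_i \sum_j (v 0 i)^* * A i j * v 0 j).

Definition povm_effect (Q : 'M[C]_d) : Prop := psdmx Q /\ psdmx (1%:M - Q).

Definition qstate (rho : 'M[C]_d) : Prop := psdmx rho /\ \tr rho = 1.

(* tr(Q A), a real number for Hermitian Q, A (we take the real part) *)
Definition trR (Q A : 'M[C]_d) : R := complex.Re (\tr (Q *m A)).

Definition elog (x : \bar R) : \bar R :=
  match x with
  | EFin y => if (0 < y)%R then (ln y)%:E else -oo%E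
  | +oo%E => +oo%E
  | -oo%E => -oo%E
  end.

Definition DH (M : R -> set 'M[C]_d) (r eta : R) (rho Gamma : 'M[C]_d) : \bar R :=
  oppe (elog (ereal_inf [set (trR Q Gamma / trR Q rho)%:E
                     | Q in [set Q | M r Q /\ eta <= trR Q rho]])).

Definition HH (M : R -> set 'M[C]_d) (r eta : R) (rho : 'M[C]_d) : \bar R :=
  oppe (DH M r eta rho 1%:M).

Definition betar (M : R -> set 'M[C]_d) (r : R) (rho sigma : 'M[C]_d) : R :=
  sup [set `|trR Q (rho - sigma)| | Q in M r].

Definition maxmixed : 'M[C]_d := (d%:R)^-1 *: 1%:M.

Definition proj_pure (v : 'rV[C]_d) : 'M[C]_d := \matrix_(i, j) (v 0 i * (v 0 j)^*).

Definition unit_vec (v : 'rV[C]_d) : Prop := \sum_i (v 0 i * (v 0 i)^*) = 1.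

Definition Cstrong (M : R -> set 'M[C]_d) (delta : R) (v : 'rV[C]_d) : \bar R :=
  ereal_inf [set r%:E | r in [set r | 0 <= r /\
              1 - (d%:R)^-1 - delta <= betar M r (proj_pure v) maxmixed]].

Definition complexity_family (M : R -> set 'M[C]_d) : Prop :=
  (forall r Q, 0 <= r -> M r Q -> povm_effect Q) /\
  M 0 1%:M /\
  (forall r r', 0 <= r -> r <= r' -> M r `<=` M r').

End QDefs.

(* Main.v *)
Require Import Defs.
From mathcomp Require Import all_boot all_order all_algebra.
From mathcomp.real_closed Require Import complex.
From mathcomp Require Import all_classical all_reals all_analysis.
From mathcomp Require Import lra.
Import Order.TTheory GRing.Theory Num.Theory.
Local Open Scope ring_scope.
Local Open Scope classical_set_scope.
Section S.
Variable R : realType.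
Local Notation C := R[i].
Variable d : nat.

Lemma conjE (x : C) : Num.conj x = conjc x.
Proof. reflexivity. Qed.

Definition vec (i j : 'I_d) (u : C) : 'rV[C]_d :=
  \row_k ((k == i)%:R + u * (k == j)%:R).

Lemma sumdR (F : 'I_d -> C) i j u :
  \sum_l F l * ((l == i)%:R + u * (l == j)%:R) = F i + F j * u.
Proof.
under eq_bigr do rewrite mulrDr.
rewrite big_split /=; congr (_ + _).
  rewrite (bigD1 i) //= eqxx mulr1 big1 ?addr0 // => l /negbTE ->.
  by rewrite mulr0.
rewrite (bigD1 j) //= eqxx mulr1 big1 ?addr0 // => l /negbTE ->.
by rewrite !mulr0.
Qed.

Lemma sumdL (F : 'I_d -> C) i j u :
  \sum_l ((l == i)%:R + u * (l == j)%:R) * F l = F i + u * F j.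
Proof.
rewrite (eq_bigr (fun l => F l * ((l == i)%:R + u * (l == j)%:R))).
  by rewrite sumdR mulrC.
by move=> l _; rewrite mulrC.
Qed.

Lemma qf_vec (A : 'M[C]_d) i j u :
  \sum_k \sum_l Num.conj ((vec i j u) 0 k) * A k l * (vec i j u) 0 l
  = A i i + A i j * u + Num.conj u * (A j i + A j j * u).
Proof.
under eq_bigr => k _.
  under eq_bigr => l _ do rewrite !mxE -mulrA.
  rewrite -mulr_sumr sumdR rmorphD rmorphM /= !rmorph_nat.
over.
by rewrite sumdL.
Qed.
Lemma ReMul (x y : C) : complex.Re (x * y) = complex.Re x * complex.Re y - complex.Im x * complex.Im y.
Proof. move: x y => [a b] [c e]. by simpc. Qed.

Lemma psd_vec (A : 'M[C]_d) i j u : psdmx A ->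
  0 <= complex.Re (A i i + A i j * u + Num.conj u * (A j i + A j j * u)).
Proof.
case=> _ /(_ (vec i j u)); rewrite qf_vec lecE => /andP[_].
by [].
Qed.

Lemma entry_bound (Q : 'M[C]_d) i j : povm_effect Q ->
  `|complex.Re (Q i j)| <= 2 /\ `|complex.Im (Q i j)| <= 2.
Proof.
move=> [PQ PIQ].
have hQ := PQ.1.
have A1 := psd_vec _ i j 1 PQ. have A2 := psd_vec _ i j (-1) PQ.
have A3 := psd_vec _ i j 'i%C PQ. have A4 := psd_vec _ i j 0 PQ.
have A5 := psd_vec _ j j 0 PQ.
have B1 := psd_vec _ i j 1 PIQ. have B2 := psd_vec _ i j (-1) PIQ.
have B3 := psd_vec _ i j 'i%C PIQ. have B4 := psd_vec _ i j 0 PIQ.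
have B5 := psd_vec _ j j 0 PIQ.
move: A1 A2 A3 A4 A5 B1 B2 B3 B4 B5; rewrite !mxE (hQ i j) !conjE.
rewrite eqxx [j == i]eq_sym.
move: (Q i j) (Q i i) (Q j j) => [a b] [p p'] [s s'].
case: (i == j) => /=; simpc => /=; move=> *;
  (split; rewrite ler_norml; apply/andP; split; lra).
Qed.

Lemma ReD (x y : C) : complex.Re (x + y) = complex.Re x + complex.Re y.
Proof. by move: x y => [a b] [c e]; simpc. Qed.
Lemma ReB (x y : C) : complex.Re (x - y) = complex.Re x - complex.Re y.
Proof. by move: x y => [a b] [c e]; simpc. Qed.
Lemma Re0 : complex.Re (0 : C) = 0. Proof. by []. Qed.

Lemma Re_sum (I : Type) (r : seq I) (P : pred I) (F : I -> C) :
  complex.Re (\sum_(i <- r | P i) F i) = \sum_(i <- r | P i) complex.Re (F i).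
Proof. exact: (big_morph _ ReD Re0). Qed.

Definition Kb (A : 'M[C]_d) : R :=
  \sum_i \sum_j 2 * (`|complex.Re (A j i)| + `|complex.Im (A j i)|).

Lemma trR_bound (Q A : 'M[C]_d) : povm_effect Q -> `|trR Q A| <= Kb A.
Proof.
move=> PQ; rewrite /trR /mxtrace.
have -> : \sum_i (Q *m A) i i = \sum_i \sum_j Q i j * A j i.
  by apply: eq_bigr => i _; rewrite mxE.
rewrite Re_sum; apply: le_trans (ler_norm_sum _ _ _) _.
apply: ler_sum => i _; rewrite Re_sum; apply: le_trans (ler_norm_sum _ _ _) _.
apply: ler_sum => j _; rewrite ReMul.
apply: le_trans (ler_normB _ _) _; rewrite !normrM.
have [h1 h2] := entry_bound _ i j PQ.
have := normr_ge0 (complex.Re (A j i)); have := normr_ge0 (complex.Im (A j i)).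
move=> *; nra.
Qed.

Lemma trRB (Q A B : 'M[C]_d) : trR Q (A - B) = trR Q A - trR Q B.
Proof. by rewrite /trR mulmxBr raddfB /= ReB. Qed.

Lemma beta_ub (M : R -> set 'M[C]_d) r rho sigma Q :
  complexity_family M -> 0 <= r -> M r Q ->
  `|trR Q (rho - sigma)| <= betar M r rho sigma.
Proof.
move=> [Hp _] hr HQ; apply: sup_upper_bound; last by exists Q.
split; first by exists `|trR Q (rho - sigma)|; exists Q.
exists (Kb (rho - sigma)) => x [Q' HQ' <-].
exact: trR_bound (Hp _ _ hr HQ').
Qed.

Lemma beta_ge0 (M : R -> set 'M[C]_d) r rho sigma :
  complexity_family M -> 0 <= r -> 0 <= betar M r rho sigma.
Proof.
move=> HM hr; have [_ [H1 Hm]] := HM.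
apply: le_trans (normr_ge0 _) (@beta_ub M r rho sigma 1%:M HM hr _).
exact: (Hm 0 r (lexx 0) hr _ H1).
Qed.

Lemma trR1 (Q : 'M[C]_d) : trR Q 1%:M = complex.Re (\tr Q).
Proof. by rewrite /trR mulmx1. Qed.

Lemma trRmm (Q : 'M[C]_d) : (0 < d)%N ->
  trR Q (maxmixed R d) = complex.Re (\tr Q) / d%:R.
Proof.
move=> hd; rewrite /trR /maxmixed -scalemxAr mxtraceZ mulmx1.
have -> : ((d%:R : C)^-1) = (((d%:R : R)^-1)%:C)%C.
  by rewrite fmorphV /= rmorph_nat; reflexivity.
move: (\tr Q) => [a b]; simpc => /=; exact: mulrC.
Qed.

Lemma elog_ge (L : R) (x : \bar R) : 0 < L -> (L%:E <= x)%E -> ((ln L)%:E <= elog x)%E.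
Proof.
move=> hL; case: x => [y| |] //=.
- rewrite lee_fin => hy; have hy0 : 0 < y by apply: lt_le_trans hL hy.
  by rewrite hy0 lee_fin ler_ln ?posrE.
- by move=> _; rewrite leey.
Qed.
End S.

Lemma dpos (R : realType) (n : nat) (v : 'rV[R[i]]_n) : unit_vec v -> (0 < n)%N.
Proof.
case: n v => [|n] // v; rewrite /unit_vec big_ord0 => /eqP.
by rewrite eq_sym oner_eq0.
Qed.

Theorem propositionD14 (R : realType) (d : nat) (M : R -> set 'M[R[i]]_d) :
  complexity_family M ->
  (forall (rho sigma : 'M[R[i]]_d) (r eta : R),
     qstate rho -> qstate sigma -> 0 <= r -> 0 < eta <= 1 ->
     betar M r rho sigma < eta ->
     (DH M r eta rho sigma <= (- ln (1 - betar M r rho sigma / eta))%:E)%E) /\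
  (forall (delta r eta : R) (v : 'rV[R[i]]_d),
     0 <= delta -> unit_vec v -> 0 <= r -> 0 < eta <= 1 ->
     (r%:E < Cstrong M delta v)%E ->
     1 - (d%:R)^-1 - delta < eta ->
     let c := (1 - (d%:R)^-1 - delta) / eta in
     ((ln (d%:R : R) - ln (1 - c)^-1)%:E < HH M r eta (proj_pure v))%E).
Proof.
move=> HM; split.
- move=> rho sigma r eta _ _ hr /andP[he0 he1] hb.
  have hb0 := @beta_ge0 R d M r rho sigma HM hr.
  set b := betar M r rho sigma in hb hb0 *.
  set x := b / eta.
  have hx0 : 0 <= x by rewrite /x divr_ge0 // ltW.
  have hx1 : x < 1 by rewrite /x ltr_pdivrMr // mul1r.
  have hbx : b = x * eta by rewrite /x divfK // gt_eqF.
  have hL : 0 < 1 - x by rewrite subr_gt0.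
  have key : ((1 - x)%R%:E <= ereal_inf [set (trR Q sigma / trR Q rho)%R%:E
                     | Q in [set Q | M r Q /\ (eta <= trR Q rho)%R]])%E.
    apply/ereal_infP => _ [Q [HQ hQe] <-]; rewrite lee_fin.
    have ht : 0 < trR Q rho by apply: lt_le_trans he0 hQe.
    rewrite ler_pdivlMr //.
    have := @beta_ub R d M r rho sigma Q HM hr HQ; rewrite -/b trRB => /ler_normlP [_ h2].
    nra.
  rewrite /DH EFinN leeN2.
  exact: elog_ge hL key.
- move=> delta r eta v hd hv hr /andP[he0 he1] hC ha.
  cbv zeta; set c := (1 - _ - delta) / eta.
  have hd0 := @dpos R d v hv.
  have hD : 0 < (d%:R : R) by rewrite ltr0n.
  have hb0 := @beta_ge0 R d M r (proj_pure v) (maxmixed R d) HM hr.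
  set a := 1 - (d%:R)^-1 - delta.
  set b := betar M r (proj_pure v) (maxmixed R d) in hb0 *.
  have hba : b < a.
    rewrite ltNge; apply/negP => hab.
    have : (Cstrong M delta v <= r%:E)%E.
      by apply: ereal_inf_lbound; exists r => //; split.
    by rewrite leNgt hC.
  set x := b / eta.
  have hx0 : 0 <= x by rewrite /x divr_ge0 // ltW.
  have hbx : b = x * eta by rewrite /x divfK // gt_eqF.
  have hxc : x < c by rewrite /x /c ltr_pM2r // invr_gt0.
  have hc1 : c < 1 by rewrite /c ltr_pdivrMr // mul1r.
  have hL : 0 < d%:R * (1 - x) by rewrite mulr_gt0 // subr_gt0; apply: lt_trans hc1.
  have key : ((d%:R * (1 - x))%R%:E <= ereal_inf [set (trR Q 1%:M / trR Q (proj_pure v))%R%:E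
                     | Q in [set Q | M r Q /\ (eta <= trR Q (proj_pure v))%R]])%E.
    apply/ereal_infP => _ [Q [HQ hQe] <-]; rewrite lee_fin.
    have ht : 0 < trR Q (proj_pure v) by apply: lt_le_trans he0 hQe.
    rewrite ler_pdivlMr //.
    have := @beta_ub R d M r (proj_pure v) (maxmixed R d) Q HM hr HQ.
    rewrite -/b trRB trRmm // -trR1 => /ler_normlP [_ h2].
    move: h2; set T := trR Q 1%:M; set t := trR Q (proj_pure v) => h2.
    have hT : T = (T / d%:R) * d%:R by rewrite divfK // gt_eqF.
    set T' := T / d%:R in hT h2.
    have h3 : (1 - x) * t <= T' by rewrite hbx in h2; nra.
    rewrite hT; nra.
  rewrite /HH /DH oppeK.
  apply: lt_le_trans (@elog_ge R _ _ hL key).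
  rewrite lte_fin lnV ?posrE ?subr_gt0 // opprK -lnM ?posrE ?subr_gt0 //.
  rewrite ltr_ln ?posrE ?mulr_gt0 ?subr_gt0 //.
  rewrite ltr_pM2l // ltrD2l ltrN2 // ?hxc //.
  exact: lt_trans hxc hc1.
Qed.
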